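(* There exist almost discrete Fréchet–Urysohn (Tychonoff) spaces $X$ and $Y$ such that $X\times Y$ is not a weakly Grothendieck space. (For instance, $X$ the countable sequential fan $S_\omega$ and $Y$ the sequential fan $S_{\mathfrak{c}}$ with $2^\omega$ many spines.)
   Context: A space is almost discrete if it has exactly one non-isolated point. $S_\kappa$ denotes the quotient of the disjoint sum of $\kappa$ convergent sequences (with their limits) obtained by identifying all the limit points to one point. $C_p(X)$ is the space of continuous real-valued functions on $X$ with the pointwise convergence topology. A space $Z$ is a $g$-space if every subset $A\subseteq Z$ such that every infinite subset of $A$ has an accumulation point in $Z$ has compact closure in $Z$; $X$ is weakly Grothendieck if $C_p(X)$ is a $g$-space. *)

(* Defs.v *)
From HB Require Import structures.
From mathcomp Require Import all_boot all_order all_algebra.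
From mathcomp Require Import all_classical all_reals all_analysis.
Set Implicit Arguments. Unset Strict Implicit. Unset Printing Implicit Defensive.
Import Order.TTheory GRing.Theory Num.Theory numFieldTopology.Exports numFieldNormedType.Exports.
Local Open Scope classical_set_scope.
Local Open Scope ring_scope.

Definition isolated_point {X : topologicalType} (x : X) : Prop := nbhs x [set x].

Definition almost_discrete (X : topologicalType) : Prop :=
  exists x : X, ~ isolated_point x /\ forall y : X, y <> x -> isolated_point y.

Definition frechet_urysohn (X : topologicalType) : Prop :=
  forall (A : set X) (x : X), closure A x ->
    exists u : nat -> X, (forall n, A (u n)) /\ (u @ \oo --> x).

Definition tychonoff_space (R : realType) (X : topologicalType) : Prop :=
  accessible_space X /\
  forall (B : set X) (x : X), closed B -> ~ B x ->
    exists f : X -> R, continuous f /\ f x = 0 /\ (forall b, B b -> f b = 1).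

Definition Cp (R : realType) (X : topologicalType) : set {ptws X -> R} :=
  [set f | continuous (f : X -> R)].

(* The closure of A in S is closure A ∩ S, and compactness of a subset of the
   ambient space coincides with compactness in the subspace topology. *)
Definition g_subspace {Z : topologicalType} (S : set Z) : Prop :=
  forall A : set Z, A `<=` S ->
    (forall B : set Z, B `<=` A -> infinite_set B ->
       exists z, S z /\ limit_point B z) ->
    compact (closure A `&` S).

Arguments Cp : clear implicits.

Definition weakly_grothendieck (R : realType) (X : topologicalType) : Prop :=
  g_subspace (Cp R X).

(* Main.v *)
Require Import Defs.
From HB Require Import structures.
From mathcomp Require Import all_boot all_order all_algebra.
From mathcomp Require Import all_classical all_reals all_analysis.
Import Order.TTheory GRing.Theory Num.Theory numFieldTopology.Exports numFieldNormedType.Exports.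
Local Open Scope classical_set_scope.
Local Open Scope ring_scope.

Definition fan (I : Type) := option (I * nat).
Definition fan_open (I : Type) (U : set (fan I)) : Prop :=
  U None -> exists psi : I -> nat, forall i k, (psi i <= k)%N -> U (Some (i, k)).

Arguments fan_open {I}.
HB.instance Definition _ (I : Type) := gen_eqMixin (fan I).
HB.instance Definition _ (I : Type) := gen_choiceMixin (fan I).

Section FanTop.
Context (I : Type).
Lemma fan_openT : fan_open (@setT (fan I)).
Proof. by move=> _; exists (fun=> 0%N). Qed.
Lemma fan_openI : setI_closed (@fan_open I).
Proof.
move=> A B oA oB [/oA [p Hp] /oB [q Hq]].
exists (fun i => maxn (p i) (q i)) => i k; rewrite geq_max => /andP[h1 h2]; split; [exact: Hp|exact: Hq].
Qed.
Lemma fan_op_bigU (J : Type) (f : J -> set (fan I)) : (forall j, fan_open (f j)) -> fan_open (\bigcup_j f j).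
Proof.
move=> H [j _ fj]; have [p Hp] := H j fj; exists p => i k pk; exists j => //; exact: Hp.
Qed.
HB.instance Definition _ := isOpenTopological.Build (fan I) fan_openT fan_openI fan_op_bigU.
End FanTop.


Lemma fan_nbhsE {I : Type} (x : fan I) A : nbhs x A <-> exists B, [/\ fan_open B, B x & B `<=` A].
Proof. by []. Qed.

Lemma fan_openE {I : Type} (A : set (fan I)) : open A <-> fan_open A.
Proof.
split.
  move=> oA; rewrite openE in oA.
  move=> /oA [B [oB BN sBA]]; have [psi Hp] := oB BN.
  by exists psi => i k /Hp /sBA.
move=> oA; rewrite openE => x Ax; exists A; split => //.
Qed.

Lemma fan_iso {I : Type} (a : I * nat) : nbhs (Some a : fan I) [set Some a].
Proof. by exists [set Some a]; split => //. Qed.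

Lemma fan_None_not_iso (I : Type) (i0 : I) : ~ isolated_point (None : fan I).
Proof.
move=> [B [oB BN sB]]; have [psi Hp] := oB BN.
by have := sB _ (Hp i0 (psi i0) (leqnn _)).
Qed.

Lemma fan_almost_discrete (I : Type) (i0 : I) : almost_discrete (fan I).
Proof.
exists None; split; first exact: fan_None_not_iso.
by case=> // a _; exact: fan_iso.
Qed.

Lemma fan_FU (I : Type) : frechet_urysohn (fan I).
Proof.
move=> A x clA.
case: x clA => [a|] clA.
  have [y [Ay ya]] := clA _ (fan_iso a); rewrite ya in Ay.
  by exists (fun=> Some a); split => //; exact: cvg_cst.
have [AN|nAN] := pselect (A None).
  by exists (fun=> None); split => //; exact: cvg_cst.
have [i Hi] : exists i, forall N, exists k, (N <= k)%N /\ A (Some (i, k)).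
  apply: contrapT => H.
  have H' : forall i, exists N, forall k, (N <= k)%N -> ~ A (Some (i, k)).
    move=> i; apply: contrapT => H2; apply: H; exists i => N.
    apply: contrapT => H3; apply: H2; exists N => k Nk Ak; apply: H3; by exists k; split.
  have [psi Hpsi] := choice H'.
  pose B : set (fan I) := fun z => match z with None => True | Some (i, k) => (psi i <= k)%N end.
  have nB : nbhs (None : fan I) B by exists B; split => //; move=> _; exists psi.
  have [[[i k]|] [Az Bz]] := clA _ nB; last by [].
  exact: Hpsi Bz Az.
have [g Hg] := choice Hi.
exists (fun n => Some (i, g n)); split; first by move=> n; have [] := Hg n.
move=> W /= [B [oB BN sBW]]; have [psi Hp] := oB BN.
exists (psi i) => // n /= hn; apply: sBW; apply: Hp.
by apply: leq_trans hn _; have [] := Hg n.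
Qed.

Lemma ind_cont (R : realType) (T : topologicalType) (U : set T) (a b : R) :
  open U -> open (~` U) -> continuous (fun z => if pselect (U z) then a else b).
Proof.
move=> oU oC x; apply: cvg_near_cst.
case: (pselect (U x)) => Ux.
  have nU : nbhs x U by apply: open_nbhs_nbhs; split.
  by apply: filterS nU => z Uz /=; case: pselect.
have nU : nbhs x (~` U) by apply: open_nbhs_nbhs; split.
by apply: filterS nU => z Uz /=; case: pselect.
Qed.

Lemma fan_tych (R : realType) (I : Type) : tychonoff_space R (fan I).
Proof.
split.
  move=> x y xy.
  case: x xy => [a|] xy.
    exists [set Some a]; split; first by apply/fan_openE.
      by rewrite inE.
    by rewrite inE /= => ya; move: xy; rewrite ya eqxx.
  case: y xy => [[j k]|] xy; last by rewrite eqxx in xy.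
  exists (~` [set Some (j, k)]); split.
  - apply/fan_openE => _; exists (fun=> k.+1) => i k' hk [_ kk].
    by rewrite kk ltnn in hk.
  - by rewrite inE.
  - by rewrite inE /= => /(_ erefl).
move=> B x cB nBx; case: x nBx => [[j k]|] nBx.
  have oU : open [set (Some (j, k) : fan I)] by apply/fan_openE.
  have oC : open (~` [set (Some (j, k) : fan I)]).
    apply/fan_openE => _; exists (fun=> k.+1) => i k' hk [_ kk].
    by rewrite kk ltnn in hk.
  exists (fun z => if pselect ([set (Some (j, k) : fan I)] z) then 0 else 1); split; first exact: ind_cont.
  split; first by case: pselect => //= H; exfalso; apply: H.
  by move=> b Bb; case: pselect => // bj; exfalso; apply: nBx; rewrite -bj.
have oU : open (~` B) by exact: closed_openC.
have oC : open (~` ~` B) by rewrite setCK; apply/fan_openE => BN; exfalso; exact: nBx.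
exists (fun z => if pselect ((~` B) z) then 0 else 1); split; first exact: ind_cont.
split; first by case: pselect.
by move=> b Bb; case: pselect.
Qed.

Definition XF := fan nat.
Definition YF := fan (nat -> nat).
Definition Zt := (XF * YF)%type.
Definition Sset (z : Zt) : Prop :=
  match z with (Some (n, m), Some (phi, k)) => m = phi n /\ k = n | _ => False end.

Lemma Z_nbhs {a : XF} {b : YF} {P Q} : nbhs a P -> nbhs b Q -> nbhs ((a, b) : Zt) (P `*` Q).
Proof. by move=> nP nQ; exists (P, Q). Qed.

Lemma main_avoid (e : nat -> nat -> Zt) :
  exists W, nbhs ((None, None) : Zt) W /\ forall z, W z -> Sset z -> ~ exists i k, e i k = z.
Proof.
pose phik i k : nat -> nat := match (e i k).2 with Some (phi, _) => phi | None => fun=> 0%N end.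
pose psi n := (\max_(i < n.+1) \max_(k < n.+1) phik i k n).+1%N.
pose theta (phi : nat -> nat) := let ik := xget (0%N, 0%N) [set ik | phik ik.1 ik.2 = phi] in maxn ik.1 ik.2.
pose P : set XF := fun x => match x with None => True | Some (n, m) => (psi n <= m)%N end.
pose Q : set YF := fun y => match y with None => True | Some (phi, k) => (theta phi <= k)%N end.
exists (P `*` Q); split.
  apply: Z_nbhs.
    by exists P; split => // _; exists psi.
  by exists Q; split => // _; exists theta.
case=> [[[n m]|] [[phi k']|]] //= [Pz Qz] [hm hkn] [i [k eik]]; subst m k'.
have hphi : phik i k = phi by rewrite /phik eik.
have ex : exists ik, [set ik | phik ik.1 ik.2 = phi] ik by exists (i, k).
have := xgetPex (0%N, 0%N) ex; move: Qz; rewrite /theta.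
case: xget => i' k'' /= + hik.
rewrite geq_max => /andP[hi hk].
have hi' : (i' < n.+1)%N by rewrite ltnS.
have hk' : (k'' < n.+1)%N by rewrite ltnS.
have h1 := @leq_bigmax _ (fun j : 'I_n.+1 => phik i' j n) (Ordinal hk').
have h2 := @leq_bigmax _ (fun j : 'I_n.+1 => \max_(k < n.+1) phik j k n)%N (Ordinal hi').
have h3 := leq_trans h1 h2; rewrite /= hik in h3.
have := leq_ltn_trans h3 Pz; by rewrite ltnn.
Qed.

Lemma local_avoid (e : nat -> nat -> Zt) (q : Zt) :
  nbhs q [set q] \/
  (~ Sset q /\ exists W, nbhs q W /\ forall z, W z -> Sset z -> ~ exists i k, e i k = z).
Proof.
case: q => [[a|] [b|]].
- left; have := Z_nbhs (fan_iso a) (fan_iso b).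
  apply: filterS. by case=> x y /= [-> ->].
- case: a => n m; right; split => //.
  pose Q : set YF := fun y => match y with None => True | Some (phi, k) => (n < k)%N end.
  exists ([set Some (n, m)] `*` Q); split.
    by apply: Z_nbhs; [exact: fan_iso| exists Q; split => // _; exists (fun=> n.+1)].
  case=> [[[n' m']|] [[phi k]|]] //= [[-> ->] Qk] [_ kn].
  by move: Qk; rewrite kn ltnn.
- case: b => phi k; right; split => //.
  pose P : set XF := fun x => match x with None => True | Some (n, m) => (phi n < m)%N end.
  exists (P `*` [set Some (phi, k)]); split.
    by apply: Z_nbhs; [exists P; split => // _; exists (fun n => (phi n).+1)| exact: fan_iso].
  case=> [[[n m]|] [[phi' k']|]] //= [Pm [-> ->]] [mn _].
  by move: Pm; rewrite mn ltnn.
- right; split => //; exact: main_avoid.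
Qed.

Lemma h_cont (R : realType) (e : nat -> nat -> Zt) (h : Zt -> R) :
  (forall z, h z != 0 -> Sset z /\ exists i k, e i k = z) -> continuous h.
Proof.
move=> hH q; apply: cvg_near_cst.
case: (local_avoid e q) => [iso|[nS [W [nW HW]]]].
  by apply: filterS iso => z ->.
have hq : h q = 0.
  by have [//|/hH [/nS]] := eqVneq (h q) 0.
apply: filterS nW => z Wz; rewrite hq.
have [//|/hH [Sz ez]] := eqVneq (h z) 0.
by exfalso; exact: HW Wz Sz ez.
Qed.

Definition pZ : Zt := (None, None).
Definition indS (R : realType) (l : seq Zt) : Zt -> R :=
  fun z => if pselect (Sset z /\ z \in l) then 1 else 0.
Definition oneS (R : realType) : Zt -> R := fun z => if pselect (Sset z) then 1 else 0.
Definition Aset (R : realType) : set {ptws Zt -> R} := [set f | exists l, f = indS R l].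

Lemma indS_cont (R : realType) l : continuous (indS R l).
Proof.
apply: (@h_cont R (fun _ k => nth pZ l k)) => z.
rewrite /indS; case: (pselect (Sset z /\ z \in l)) => [[Sz zl]|nS] /= H; last by rewrite eqxx in H.
by split => //; exists 0%N, (index z l); rewrite nth_index.
Qed.

Lemma oneS_not_cont (R : realType) : ~ continuous (oneS R).
Proof.
move=> c.
have op : oneS R pZ = 0 by rewrite /oneS; case: pselect.
have := c pZ (ball (oneS R pZ) 1) (nbhsx_ballx _ _ ltr01).
case=> [[P Q] /= [[B [oB BN sBP]] [C [oC CN sCQ]]] sPQ].
have [psi Hp] := oB BN; have [theta Ht] := oC CN.
pose n := theta psi.
have := sPQ (Some (n, psi n), Some (psi, n)) (conj (sBP _ (Hp _ _ (leqnn _))) (sCQ _ (Ht _ _ (leqnn _)))).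
rewrite /= op /oneS; case: (pselect (Sset (Some (n, psi n), Some (psi, n)))) => [_|[]] /=; last by split.
by rewrite /ball /= sub0r normrN normr1 ltxx.
Qed.

Lemma oneS_closure (R : realType) : closure (Aset R) (oneS R : {ptws Zt -> R}).
Proof.
pose B := fun l0 : seq Zt => [set l : seq Zt | {subset l0 <= l}].
have FF : Filter (filter_from setT B).
  apply: filter_fromT_filter; first by exists [::].
  move=> i j; exists (i ++ j) => l hl; split => x xi; apply: hl; by rewrite mem_cat xi ?orbT.
have PF : ProperFilter (filter_from setT B).
  by apply: filter_from_proper => i _; exists i.
pose F := (fun l => (indS R l : {ptws Zt -> R})) @ filter_from setT B.
have cv : {ptws, F --> oneS R}.
  apply/pointwise_cvgP => t; apply: cvg_near_cst.
  exists [:: t] => // l /= hl; have tl := hl t (mem_head _ _).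
  rewrite /indS /oneS; case: pselect => [[]|] //; case: pselect => //.
  by move=> St []; split.
move=> W nW; have FW := cv _ nW.
have FA : F (Aset R) by exists [::] => // l _; exists l.
have [g [Ag Wg]] := filter_ex (filterI FA FW).
by exists g.
Qed.

Lemma inj_seq (T : Type) (B : set T) : infinite_set B -> exists b : nat -> T, injective b /\ forall n, B (b n).
Proof.
move=> /infiniteP /card_leP [f].
exists (fun n => val (f (SigSub (mem_set (I : [set: nat] n))))); split.
  move=> m n /val_inj /(@inj _ _ _ f) h.
  by have := congr1 val (h (mem_set I) (mem_set I)).
move=> n; exact: set_valP.
Qed.

Lemma not_wg (R : realType) : ~ weakly_grothendieck R Zt.
Proof.
move=> H.
have AC : Aset R `<=` Cp R Zt by move=> f [l ->]; exact: indS_cont.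
have acc : forall B, B `<=` Aset R -> infinite_set B ->
    exists z, Cp R Zt z /\ limit_point B z.
  move=> B BA /inj_seq [b [binj Bb]].
  have : forall n, exists l, b n = indS R l by move=> n; exact: BA _ (Bb n).
  move=> /choice [L HL].
  pose e i k := nth pZ (L i) k.
  pose Kz (z : Zt) : set R := [set r | r = 0 \/ (r = 1 /\ Sset z /\ exists i k, e i k = z)].
  have cK : compact ([set f | forall z, Kz z (f z)] : set {ptws Zt -> R}).
    apply: tychonoff => z; apply: finite_compact.
    apply: (@sub_finite_set _ _ [set 0; 1]); last exact: finite_set2.
    by move=> r [->|[-> _]]; [left|right].
  have KC : [set f | forall z, Kz z (f z)] `<=` Cp R Zt.
    move=> f Kf; apply: (@h_cont R e) => z fz.
    by case: (Kf z) => [f0|[_ h]]; [rewrite f0 eqxx in fz|exact: h].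
  have Kb : forall n, [set f | forall z, Kz z (f z)] (b n).
    move=> n z; rewrite HL /indS; case: (pselect (Sset z /\ z \in L n)) => [[Sz zl]|_] /=; last by left.
    right; split => //; split => //; exists n, (index z (L n)); by rewrite /e nth_index.
  have PF : ProperFilter (b @ \oo) by exact: fmap_proper_filter.
  have FK : (b @ \oo) [set f | forall z, Kz z (f z)] by exists 0%N => // n _; exact: Kb.
  have [c [Kc cc]] := cK (b @ \oo) PF FK.
  exists c; split; first exact: KC.
  move=> U nU.
  have [N HN] : exists N, forall n, (N <= n)%N -> b n != c.
    case: (pselect (exists n, b n = c)) => [[n0 h0]|nb].
      exists n0.+1 => n hn; apply/eqP => bn.
      by have := binj _ _ (etrans bn (esym h0)) => nn0; rewrite nn0 ltnn in hn.
    by exists 0%N => n _; apply/eqP => bn; apply: nb; exists n.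
  have FN : (b @ \oo) [set y | exists2 n, (N <= n)%N & b n = y].
    by exists N => // n hn; exists n.
  have [y [[n hn <-] Uy]] := cc _ _ FN nU.
  exists (b n); split; [exact: HN | exact: Bb | exact: Uy].
have cpt := H (Aset R) AC acc.
have hs : hausdorff_space {ptws Zt -> R} := hausdorff_product (fun _ => @Rhausdorff R).
have cl := compact_closed hs cpt.
have : (closure (Aset R) `&` Cp R Zt) (oneS R).
  apply: cl; apply: (closureS _ (oneS_closure R)).
  by move=> f Af; split; [exact: subset_closure | exact: AC].
by move=> [_]; exact: oneS_not_cont.
Qed.

Theorem proposition11 (R : realType) :
  exists X Y : topologicalType,
    (almost_discrete X /\ frechet_urysohn X /\ tychonoff_space R X) /\
    (almost_discrete Y /\ frechet_urysohn Y /\ tychonoff_space R Y) /\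
    ~ weakly_grothendieck R (X * Y)%type.
Proof.
exists (fan nat), (fan (nat -> nat)).
split; first by split; [exact: (@fan_almost_discrete nat 0%N)|split; [exact: fan_FU|exact: fan_tych]].
split; first by split; [exact: (@fan_almost_discrete (nat -> nat) (fun=> 0%N))|split; [exact: fan_FU|exact: fan_tych]].
exact: not_wg.
Qed.
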